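(* An $A$-code $C$ of length $2$ satisfies $C=C^{\perp R}$ if and only if one of the following holds: (a) $C$ is of class I with $g_1=1$ and, when $\mathrm{char}\,\mathbb{F}\neq 2$, $g_2=0$; (b) $C$ is of class II with $g_2=1$; (c) $C$ is of class III with $g_1g_3=f$ in $\mathbb{F}[x]$ and, when $\mathrm{char}\,\mathbb{F}\neq2$, $g_2=0$.
   Context: Let $\mathbb{F}$ be a finite field, $f(x)\in\mathbb{F}[x]$ monic of degree $m$, $A=\mathbb{F}[x]/\langle f(x)\rangle$, elements identified with polynomials of degree $<m$. An $A$-code of length $l$ is an $A$-submodule of $A^l$; $C^\perp=\{a\in A^l:\sum_ia_ic_i=0\ \forall c\in C\}$ and $C^{\perp R}=\{(c_l,\ldots,c_1):(c_1,\ldots,c_l)\in C^\perp\}$. Every nonzero $A$-code has a unique canonical generator matrix (CGM): a matrix over $A$ whose rows generate $C$, whose rows are monic with strictly increasing leading indices (index of first nonzero entry), whose leading entries (first nonzero entries) divide $f$, such that $(f/L_i)\cdot(\text{row } i)$ is an $A$-combination of the later rows where $L_i$ is the leading entry of row $i$, and such that every entry lying above a leading entry has smaller degree than that leading entry. The nonzero codes of length 2 fall into three classes: class I, with CGM $(g_1\ g_2)$ where $0\ne g_1\mid f$ and $g_1\mid g_2$; class II, with CGM $(0\ g_2)$ where $g_2\mid f$; class III, with CGM $\begin{pmatrix}g_1&g_2\\0&g_3\end{pmatrix}$ where $g_1,g_3$ are nonzero monic divisors of $f$, $g_3$ divides $(f/g_1)g_2$, and $\deg g_2<\deg g_3$.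 *)

(* Defs.v *)
(* A = F[x]/<f>, elements represented by polynomials of
   degree < deg f (i.e. size < size f); arithmetic in A is arithmetic in
   F[x] followed by reduction modulo f. *)
From HB Require Import structures.
From mathcomp Require Import all_boot all_order all_algebra.
Set Implicit Arguments. Unset Strict Implicit. Unset Printing Implicit Defensive.
Import GRing.Theory.
Local Open Scope ring_scope.

Section Codes.
Variable F : finFieldType.
Variable f : {poly F}.

Definition red (p : {poly F}) : Prop := (size p < size f)%N.

Definition pairset := ({poly F} * {poly F})%type -> Prop.

Definition same_set (C D : pairset) : Prop := forall c, C c <-> D c.

Definition Acode (C : pairset) : Prop :=
  [/\ (forall c, C c -> red c.1 /\ red c.2),
      C (0, 0),
      (forall c d, C c -> C d -> C ((c.1 + d.1) %% f, (c.2 + d.2) %% f))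
    & (forall a c, red a -> C c -> C ((a * c.1) %% f, (a * c.2) %% f))].

Definition dual (C : pairset) : pairset := fun a =>
  [/\ red a.1, red a.2 &
      forall c, C c -> (a.1 * c.1 + a.2 * c.2) %% f = 0].

Definition dualR (C : pairset) : pairset := fun a => dual C (a.2, a.1).

Definition span1 (g1 g2 : {poly F}) : pairset := fun c =>
  exists a, red a /\ c = ((a * g1) %% f, (a * g2) %% f).

Definition span2 (g1 g2 g3 : {poly F}) : pairset := fun c =>
  exists a b, [/\ red a, red b & c = ((a * g1) %% f, (a * g2 + b * g3) %% f)].

Definition classI (C : pairset) (g1 g2 : {poly F}) : Prop :=
  [/\ [/\ g1 \is monic, red g1 & g1 %| f], g1 %| g2, red g2 & same_set C (span1 g1 g2)].

Definition classII (C : pairset) (g2 : {poly F}) : Prop :=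
  [/\ g2 \is monic, red g2, g2 %| f & same_set C (span1 0 g2)].

Definition classIII (C : pairset) (g1 g2 g3 : {poly F}) : Prop :=
  [/\ [/\ g1 \is monic, red g1 & g1 %| f],
      [/\ g3 \is monic, red g3 & g3 %| f],
      g3 %| (f %/ g1) * g2,
      (size g2 < size g3)%N
    & same_set C (span2 g1 g2 g3)].

End Codes.

(* Main.v *)
Require Import Defs.
From HB Require Import structures.
From mathcomp Require Import all_boot all_order all_algebra.
From mathcomp Require Import ring zify.
From Stdlib Require Import Classical.
Import GRing.Theory.
Local Open Scope ring_scope.


Section Aux.
Variable F : finFieldType.
Variable f : {poly F}.
Hypothesis f1 : (1 < size f)%N.

Lemma fN0 : f != 0.
Proof. by rewrite -size_poly_gt0 (ltn_trans _ f1). Qed.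

Lemma red_mod p : red f (p %% f).
Proof. by rewrite /red ltn_modp fN0. Qed.

Lemma modS p : red f p -> p %% f = p.
Proof. exact: modp_small. Qed.

Lemma red0 : red f 0.
Proof. by rewrite /red size_poly0 (ltn_trans _ f1). Qed.

Lemma red1 : red f 1.
Proof. by rewrite /red size_poly1. Qed.

Lemma modDm p q : (p %% f + q %% f) %% f = (p + q) %% f.
Proof. by rewrite modpD !modp_id -modpD. Qed.

Lemma modMm p q : ((p %% f) * q) %% f = (p * q) %% f.
Proof. by rewrite mulrC modp_mul mulrC. Qed.

Lemma modMm2 p q : (p * (q %% f)) %% f = (p * q) %% f.
Proof. by rewrite modp_mul. Qed.

Lemma eq_red p q : red f p -> red f q -> (p - q) %% f = 0 -> p = q.
Proof.
move=> hp hq; rewrite modp_small; first by move/eqP; rewrite subr_eq0 => /eqP.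
apply: leq_ltn_trans (size_polyD _ _) _; rewrite gtn_max size_polyN; exact/andP.
Qed.

Lemma two_cases (p : {poly F}) : (~~ (2 \in [pchar F]) -> p = 0) -> p + p = 0.
Proof.
case: (boolP (2 \in [pchar F])) => h H.
  by apply: addrr_pchar2; rewrite (pchar_lalg {poly F}).
by rewrite H // addr0.
Qed.

Lemma two_inv (p : {poly F}) : ~~ (2 \in [pchar F]) -> p + p = 0 -> p = 0.
Proof.
move=> h; rewrite -mulr2n -scaler_nat => /eqP; rewrite scaler_eq0; case/orP=> // h2.
  by case/negP: h; rewrite inE /= h2.
by move/eqP: h2.
Qed.

Variable C : pairset F.
Hypothesis hC : Acode f C.

Lemma C_red c : C c -> red f c.1 /\ red f c.2.
Proof. by case: hC => h _ _ _; apply: h. Qed.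

Lemma C_lin c d a b : C c -> C d ->
  C ((a * c.1 + b * d.1) %% f, (a * c.2 + b * d.2) %% f).
Proof.
case: hC => _ _ hadd hsc hc hd.
have := hadd _ _ (hsc _ _ (red_mod a) hc) (hsc _ _ (red_mod b) hd).
by rewrite /= !modMm !modDm.
Qed.

Lemma C_scal c a : C c -> C ((a * c.1) %% f, (a * c.2) %% f).
Proof.
move=> hc; have := C_lin _ _ a 0 hc hc; by rewrite !mul0r !addr0.
Qed.

End Aux.

Lemma min_ex (P : nat -> Prop) n : P n -> exists m, P m /\ forall k, (k < m)%N -> ~ P k.
Proof.
elim/ltn_ind: n => n IH Pn.
case: (classic (exists k, (k < n)%N /\ P k)) => [[k [lt Pk]]|no].
  exact: IH k lt Pk.
by exists n; split => // k lt Pk; apply no; exists k.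
Qed.

Section Ideal.
Variable F : finFieldType.
Variable f : {poly F}.
Hypothesis f1 : (1 < size f)%N.

Lemma ideal_gen (J : {poly F} -> Prop) :
  (forall p, J p -> red f p) ->
  (forall p q a b, J p -> J q -> J ((a * p + b * q) %% f)) ->
  (forall p, J p -> p = 0) \/
  exists g, [/\ g \is monic, red f g, g %| f &
     forall p, J p <-> exists a, red f a /\ p = (a * g) %% f].
Proof.
move=> Jr Jl.
case: (classic (exists p, J p /\ p != 0)) => [[p0 [Jp0 p0n]]|no]; last first.
  left=> p Jp; apply: NNPP => pn; apply: no; exists p; split => //; exact/eqP.
right.
have [n [[p [Jp pn sp]] mn]] :=
  min_ex (fun n => exists p, [/\ J p, p != 0 & size p = n]) (size p0) (ex_intro _ p0 (And3 Jp0 p0n erefl)).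
have Jred : forall q, J q -> J (q %% p).
  move=> q Jq.
  have E : ((1 * q + (- (q %/ p)) * p) %% f) = q %% p.
    rewrite mul1r mulNr {1}(divp_eq q p) addrC addKr modp_small //.
    apply: (leq_ltn_trans _ (Jr _ Jp)); rewrite -ltnS.
    by rewrite (leq_trans _ (leqnSn _)) // ltn_modp.
  by rewrite -E; apply: Jl.
have Jmod0 : forall q, J q -> q %% p = 0.
  move=> q Jq; apply: NNPP => qn; apply: (mn (size (q %% p))).
    by rewrite -sp ltn_modp.
  by exists (q %% p); split => //; [exact: Jred | exact/eqP].
have lcn : lead_coef p != 0 by rewrite lead_coef_eq0.
set g := (lead_coef p)^-1 *: p.
have gm : g \is monic by apply/monicP; rewrite lead_coefZ mulVf.
have sg : size g = size p by rewrite size_scale // invr_eq0.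
have pg : p %= g by rewrite eqp_sym eqp_scale // invr_eq0.
have Jg : J g.
  have E : (((lead_coef p)^-1%:P * p + 0 * p) %% f) = g.
    by rewrite mul0r addr0 mul_polyC modp_small // /red sg; apply: Jr.
  by rewrite -E; apply: Jl.
have redp : red f p by apply: Jr.
have redg : red f g by rewrite /red sg.
have dvdf : g %| f.
  rewrite -(eqp_dvdl _ pg); apply/modp_eq0P.
  have E : (((- (f %/ p)) * p + 0 * p) %% f) = f %% p.
    have e : f %/ p * p = f - f %% p by rewrite {2}(divp_eq f p) addrK.
    rewrite mul0r addr0 mulNr e modpN modpD modpN modpp add0r opprK modp_small //.
    by rewrite /red (leq_trans _ (ltnW redp)) // ltn_modp.
  have := Jmod0 (f %% p); rewrite modp_id; apply; rewrite -E; apply: Jl => //.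
exists g; split => // q; split.
  move=> Jq; exists (q %/ g); split.
    exact: leq_ltn_trans (leq_divp _ _) (Jr _ Jq).
  have : q %% g = 0.
    by apply/modp_eq0P; rewrite -(eqp_dvdl _ pg); apply/modp_eq0P; exact: Jmod0.
  move=> h; have e : q %/ g * g = q by rewrite [in RHS](divp_eq q g) h addr0.
  rewrite e modp_small //; exact: Jr.
case=> a [ra ->].
have E : (a * g + 0 * g) %% f = (a * g) %% f by rewrite mul0r addr0.
by rewrite -E; apply: Jl.
Qed.

End Ideal.

Section Back.
Variable F : finFieldType.
Variable f : {poly F}.
Hypothesis f1 : (1 < size f)%N.
Variable C : pairset F.
Hypothesis hC : Acode f C.

Lemma red_add p q : red f p -> red f q -> red f (p + q).
Proof.
move=> hp hq; apply: leq_ltn_trans (size_polyD _ _) _; rewrite gtn_max; exact/andP.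
Qed.

Lemma zero_of_mod p : red f p -> p %% f = 0 -> p = 0.
Proof. by move=> hp; rewrite modp_small. Qed.

Lemma dvd_small (p q : {poly F}) : p %| q -> (size q < size p)%N -> q = 0.
Proof.
move=> d s; apply/eqP; apply: contraTT s => qn; rewrite -leqNgt; exact: dvdp_leq.
Qed.

Lemma back_II : classII f C 1 -> same_set C (dualR f C).
Proof.
case=> _ _ _ hS [x y]; split.
  move/hS => [a [ra [-> ->]]]; rewrite mulr0 mod0p mulr1 modp_small //.
  split => //=; first exact: red0.
  move=> [u v] /hS [b [rb [-> ->]]] /=.
  by rewrite !(mulr0, mod0p, mul0r, addr0).
case=> /= ry rx H.
have C01 : C (0, 1).
  apply/hS; exists 1; split; first exact: red1.
  by rewrite mulr0 mod0p mulr1 modp_small //; exact: red1.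
have := H _ C01; rewrite /= mulr0 add0r mulr1 => /(zero_of_mod _ rx) x0.
apply/hS; exists y; split => //.
by rewrite x0 mulr0 mod0p mulr1 modp_small.
Qed.

Lemma back_I g2 : classI f C 1 g2 -> g2 + g2 = 0 -> same_set C (dualR f C).
Proof.
case=> _ _ rg2 hS h2 [x y]; split.
  move/hS => [a [ra [-> ->]]]; rewrite mulr1 modp_small //.
  split => /=; [exact: red_mod | done |].
  move=> [u v] /hS [b [rb [-> ->]]] /=.
  rewrite mulr1 (@modp_small _ b f rb) modpD modMm modMm2 -modpD.
  have -> : a * g2 * b + a * (b * g2) = a * b * (g2 + g2) by ring.
  by rewrite h2 mulr0 mod0p.
case=> /= ry rx H.
have C1 : C (1, g2).
  apply/hS; exists 1; split; first exact: red1.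
  by rewrite mulr1 mul1r !modp_small //; exact: red1.
have := H _ C1; rewrite /= mulr1 => E.
apply/hS; exists x; split => //.
rewrite mulr1 modp_small //; congr pair.
apply: (eq_red _ _ _ _ ry (red_mod _ _ f1 _)).
rewrite modpD modpN modp_id -modpN -modpD.
have -> : y - x * g2 = y + x * g2 - x * (g2 + g2) by ring.
by rewrite h2 mulr0 subr0.
Qed.

Lemma back_III g1 g2 g3 : classIII f C g1 g2 g3 -> g1 * g3 = f -> g2 + g2 = 0 ->
  same_set C (dualR f C).
Proof.
case=> [[g1m rg1 _] [g3m rg3 _] _ sg2 hS] ef h2 [x y].
have g3n : g3 != 0 by apply: monic_neq0.
have g1n : g1 != 0 by apply: monic_neq0.
have rg2 : red f g2 by apply: ltn_trans rg3.
split.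
  move/hS => [a [b [ra rb [-> ->]]]].
  split => /=; [exact: red_mod | exact: red_mod |].
  move=> [u v] /hS [a' [b' [ra' rb' [-> ->]]]] /=.
  rewrite modpD !modMm !modMm2 -modpD.
  have -> : (a * g2 + b * g3) * (a' * g1) + a * g1 * (a' * g2 + b' * g3)
     = (a * a' * g1) * (g2 + g2) + (b * a' + a * b') * (g1 * g3) by ring.
  by rewrite h2 mulr0 add0r ef modp_mull.
case=> /= ry rx H.
have C03 : C (0, g3).
  apply/hS; exists 0, 1; split; [exact: red0 | exact: red1 |].
  by rewrite !mul0r mod0p add0r mul1r modp_small.
have C12 : C (g1, g2).
  apply/hS; exists 1, 0; split; [exact: red1 | exact: red0 |].
  by rewrite !mul1r mul0r addr0 !modp_small.
have := H _ C03; rewrite /= mulr0 add0r => /modp_eq0P.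
rewrite -ef dvdp_mul2r // => dx.
have ex : x = x %/ g1 * g1 by apply/eqP; rewrite -dvdp_eq.
have := H _ C12; rewrite /= => /modp_eq0P.
rewrite {1}ex -ef.
have -> : y * g1 + x %/ g1 * g1 * g2 = g1 * (y + x %/ g1 * g2) by ring.
rewrite dvdp_mul2l // => dy.
have ey : y + x %/ g1 * g2 = (y + x %/ g1 * g2) %/ g3 * g3 by apply/eqP; rewrite -dvdp_eq.
apply/hS; exists (x %/ g1), (((y + x %/ g1 * g2) %/ g3) %% f); split.
- exact: leq_ltn_trans (leq_divp _ _) rx.
- exact: red_mod.
rewrite -ex modp_small //; congr pair.
rewrite modpD modMm -modpD -ey.
have -> : x %/ g1 * g2 + (y + x %/ g1 * g2) = y + x %/ g1 * (g2 + g2) by ring.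
by rewrite h2 mulr0 addr0 modp_small.
Qed.

End Back.

Section Fwd.
Variable F : finFieldType.
Variable f : {poly F}.
Hypothesis fm : f \is monic.
Hypothesis f1 : (1 < size f)%N.
Variable C : pairset F.
Hypothesis hC : Acode f C.
Hypothesis hs : same_set C (dualR f C).

Let lin := C_lin _ _ f1 _ hC.
Let Cred := C_red _ _ _ hC.

Lemma dualC c d : C c -> C d -> (c.2 * d.1 + c.1 * d.2) %% f = 0.
Proof. by move/hs => [_ _ H]; apply: H. Qed.

Lemma inC x y : red f x -> red f y ->
  (forall d, C d -> (y * d.1 + x * d.2) %% f = 0) -> C (x, y).
Proof. by move=> rx ry H; apply/hs; split. Qed.

Definition I x := exists y, C (x, y).
Definition K y := C (0, y).

Lemma I_ideal : (forall p, I p -> red f p) /\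
  (forall p q a b, I p -> I q -> I ((a * p + b * q) %% f)).
Proof.
split; first by move=> p [y /Cred []].
move=> p q a b [y hy] [z hz]; eexists; exact: (lin _ _ a b hy hz).
Qed.

Lemma K_ideal : (forall p, K p -> red f p) /\
  (forall p q a b, K p -> K q -> K ((a * p + b * q) %% f)).
Proof.
split; first by move=> p /Cred [].
move=> p q a b hp hq; have := lin _ _ a b hp hq.
by rewrite /= !mulr0 addr0 mod0p.
Qed.

Lemma neg_sub c d a : C c -> C d ->
  C ((c.1 - a * d.1) %% f, (c.2 - a * d.2) %% f).
Proof.
move=> hc hd; have := lin _ _ 1 (- a) hc hd.
by rewrite !mul1r !mulNr.
Qed.

Lemma fwd : [\/ exists g2, classI f C 1 g2 /\ (~~ (2 \in [pchar F]) -> g2 = 0),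
       classII f C 1
     | exists g1 g2 g3, [/\ classIII f C g1 g2 g3, g1 * g3 = f
                          & (~~ (2 \in [pchar F]) -> g2 = 0)]].
Proof.
have [Ir Il] := I_ideal.
have [Kr Kl] := K_ideal.
case: (ideal_gen _ _ _ Ir Il) => [I0 | [g1 [g1m rg1 g1f hI]]].
  apply: Or32.
  have C01 : C (0, 1).
    apply: inC; [exact: red0 | exact: red1 |].
    move=> [u v] /= hd; have -> : u = 0 by apply: I0; exists v.
    by rewrite !(mulr0, mul0r, addr0, mod0p).
  split; [exact: monic1 | exact: red1 | exact: dvd1p |].
  move=> [x y]; split.
    move=> hc; have x0 : x = 0 by apply: I0; exists y.
    exists y; split; first by case: (Cred _ hc).
    by rewrite x0 mulr0 mod0p mulr1 modp_small //; case: (Cred _ hc).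
  by move=> [a [ra ->]]; exact: (C_scal _ _ f1 _ hC _ a C01).
have g1n : g1 != 0 by apply: monic_neq0.
set h := f %/ g1.
have fh : h * g1 = f by rewrite divpK.
have hm : h \is monic by rewrite -(monicMl _ g1m) mulrC fh.
have Ch : C (0, h %% f).
  apply: inC; [exact: red0 | exact: red_mod |].
  move=> [u v] /= hd.
  have [a [ra ->]] : exists a, red f a /\ u = (a * g1) %% f by apply/hI; exists v.
  by rewrite mul0r addr0 modMm modMm2 mulrCA fh modp_mull.
case: (ideal_gen _ _ _ Kr Kl) => [K0 | [g3 [g3m rg3 g3f hK]]].
  apply: Or31.
  have h0 : h %% f = 0 by apply: K0.
  have hn : h != 0 by apply/eqP => e; move: (fN0 _ _ f1); rewrite -fh e mul0r eqxx.
  have s1 : size g1 = 1%N.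
    have := dvdp_leq hn (introT (modp_eq0P _ _) h0).
    rewrite /h size_divp // => le.
    have fs := size_poly_gt0 f; have gs : (0 < size g1)%N by rewrite size_poly_gt0.
    have key : forall a b : nat, (0 < a)%N = true -> (0 < b)%N -> (a <= a - b.-1)%N -> b = 1%N by clear; lia.
    move: le; rewrite (fN0 _ _ f1) in fs; exact: key.
  have g11 : g1 = 1.
    rewrite (size1_polyC (eq_leq s1)); move/monicP: g1m; rewrite /lead_coef s1 /= => ->.
    done.
  have [g2 C1] : I 1 by apply/hI; exists 1; split; [exact: red1 | rewrite g11 mulr1 modp_small //; exact: red1].
  have rg2 : red f g2 by case: (Cred _ C1).
  exists g2; split.
    split; [split; [exact: monic1 | exact: red1 | exact: dvd1p] | exact: dvd1p | done |].
    move=> [x y]; split.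
      move=> hc; exists x; case: (Cred _ hc) => /= rx ry; split => //.
      rewrite mulr1 modp_small //; congr pair.
      have := neg_sub _ _ x hc C1; rewrite /= mulr1 subrr mod0p => /K0 e.
      apply: (eq_red _ _ _ _ ry (red_mod _ _ f1 _)).
      by rewrite modpD modpN modp_id -modpN -modpD.
    by move=> [a [ra ->]]; exact: (C_scal _ _ f1 _ hC _ a C1).
  move=> nc; apply: two_inv => //.
  have := dualC _ _ C1 C1; rewrite /= mulr1 mul1r.
  by apply: zero_of_mod; apply: red_add.
apply: Or33.
have [y Cg1] : I g1 by apply/hI; exists 1; split; [exact: red1 | rewrite mul1r modp_small].
have g3n : g3 != 0 by apply: monic_neq0.
set g2 := y %% g3.
have sg2 : (size g2 < size g3)%N by rewrite ltn_modp.
have rg2 : red f g2 by apply: ltn_trans rg3.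
have C03 : C (0, g3) by apply/hK; exists 1; split; [exact: red1 | rewrite mul1r modp_small].
have C12 : C (g1, g2).
  have := neg_sub _ _ (y %/ g3) Cg1 C03.
  rewrite /= mulr0 subr0 modp_small //.
  have -> : y - y %/ g3 * g3 = g2 by rewrite /g2 {1}(divp_eq y g3) addrAC subrr add0r.
  by rewrite modp_small.
have g3h : g3 %| h.
  have [b [rb e]] : exists b, red f b /\ h %% f = (b * g3) %% f by apply/hK.
  rewrite (dvdp_mod _ g3f) e -(dvdp_mod _ g3f); exact: dvdp_mull.
have hg3 : h %| g3.
  have := dualC _ _ C03 C12; rewrite /= mul0r addr0 => /modp_eq0P.
  by rewrite -fh dvdp_mul2r.
have g3e : g3 = h by apply/eqP; rewrite -eqp_monic //; apply/andP.
exists g1, g2, g3; split.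
- split => //.
  + have [b [rb e]] : exists b, red f b /\ (h * g2) %% f = (b * g3) %% f.
      apply/hK; have := C_scal _ _ f1 _ hC _ h C12.
      by rewrite /= fh modpp.
    rewrite (dvdp_mod _ g3f) e -(dvdp_mod _ g3f); exact: dvdp_mull.
  + move=> [x z]; split.
      move=> hc; have [a [ra ex]] : exists a, red f a /\ x = (a * g1) %% f.
        by apply/hI; exists z.
      have := neg_sub _ _ a hc C12; rewrite /= ex modpD modpN modp_id -modpN -modpD subrr mod0p.
      move/hK => [b [rb e]].
      exists a, b; split => //; congr pair.
      case: (Cred _ hc) => _ rz.
      apply: (eq_red _ _ _ _ rz (red_mod _ _ f1 _)).
      by rewrite /= modpD modpN modp_id -modpN -modpD opprD addrA modpD e -modpD subrr mod0p.
    move=> [a [b [ra rb ->]]]; have := lin _ _ a b C12 C03.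
    by rewrite /= mulr0 addr0.
- by rewrite g3e mulrC.
move=> nc; apply: two_inv => //.
have := dualC _ _ C12 C12; rewrite /= => /modp_eq0P.
have -> : g2 * g1 + g1 * g2 = g1 * (g2 + g2) by ring.
rewrite -fh mulrC -g3e dvdp_mul2l // => d.
apply: dvd_small d _; apply: leq_ltn_trans (size_polyD _ _) _; rewrite gtn_max sg2 //.
Qed.

End Fwd.
Theorem mainTheorem6 (F : finFieldType) (f : {poly F}) (C : pairset F) :
  f \is monic -> (1 < size f)%N -> Acode f C ->
  (same_set C (dualR f C) <->
   [\/ exists g2, classI f C 1 g2 /\ (~~ (2 \in [pchar F]) -> g2 = 0),
       classII f C 1
     | exists g1 g2 g3, [/\ classIII f C g1 g2 g3, g1 * g3 = f
                          & (~~ (2 \in [pchar F]) -> g2 = 0)]]).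
Proof.
move=> fm f1 hC; split.
  by move=> hs; apply: fwd.
case=> [[g2 [h1 h2]] | h | [g1 [g2 [g3 [h1 h2 h3]]]]].
- apply: (back_I _ _ f1 _ _ h1); exact: two_cases.
- exact: (back_II _ _ f1 _ h).
- apply: (back_III _ _ f1 _ _ _ _ h1 h2); exact: two_cases.
Qed.
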